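(* If $H$ is a butterfly minor of a digraph $D$, then $\operatorname{dbw}(H)\le\operatorname{dbw}(D)$.
   Context: All digraphs are finite and loopless. An edge $\vec{xy}$ of $D$ is a butterfly edge if $x$ has out-degree $1$ and $y$ has in-degree $1$. Contracting $\vec{xy}$ removes $\vec{xy}$, $x$, $y$ and adds a new vertex with in-neighbourhood $(N^-(x)\cup N^-(y))\setminus\{x,y\}$ and out-neighbourhood $(N^+(x)\cup N^+(y))\setminus\{x,y\}$. $H$ is a butterfly minor of $D$ if it is obtained from a subgraph of $D$ by a sequence of contractions of butterfly edges. Directed branch-width: for $X\subseteq E(D)$, $S^V_X=\{y: \exists x,z,\ \vec{xy}\in E(D)\setminus X,\ \vec{yz}\in X\}$; $\operatorname{dbw}(D)$ is the minimum over $(T,\beta)$ ($T$ a tree of maximum degree at most three, $\beta$ a bijection from leaves onto $E(D)$) of the maximum over tree edges of $|S^V_{\beta(Y)}\cup S^V_{E(D)\setminus\beta(Y)}|$, $Y$ the leaves on one side (0 if no tree edges). *)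

(* Defs.v *)
From mathcomp Require Import all_boot.
From Stdlib Require Import ClassicalEpsilon.
Set Implicit Arguments. Unset Strict Implicit. Unset Printing Implicit Defensive.

(* A finite loopless (simple) digraph is given by a finite vertex type V and
   an irreflexive edge relation E : rel V.  Its edge set is arcs E. *)
Definition arcs (V : finType) (E : rel V) : {set V * V} :=
  [set p : V * V | E p.1 p.2].

Definition SV (V : finType) (E : rel V) (X : {set V * V}) : {set V} :=
  [set y | [exists x, exists z,
     ((x, y) \in arcs E :\: X) && ((y, z) \in X)]].

(* A tree on the vertex set 'I_n.+1 (nonempty): symmetric, irreflexive,
   connected, and acyclic (every edge is a bridge: deleting it disconnects
   its endpoints). *)
Definition del_edge (n : nat) (t : rel 'I_n) (a b : 'I_n) : rel 'I_n :=
  fun u v => t u v && ~~ (((u == a) && (v == b)) || ((u == b) && (v == a))).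

Definition is_tree (n : nat) (t : rel 'I_n.+1) : Prop :=
  symmetric t /\ irreflexive t /\
  (forall u v, connect t u v) /\
  (forall a b, t a b -> ~~ connect (del_edge t a b) a b).

Definition tdeg (n : nat) (t : rel 'I_n.+1) (a : 'I_n.+1) : nat :=
  #|[set b | t a b]|.

(* leaves: vertices of degree at most 1 (a one-vertex tree is its own leaf) *)
Definition leaves (n : nat) (t : rel 'I_n.+1) : {set 'I_n.+1} :=
  [set l | tdeg t l <= 1].

Definition branch_decomp (V : finType) (E : rel V)
    (n : nat) (t : rel 'I_n.+1) (beta : 'I_n.+1 -> V * V) : Prop :=
  is_tree t /\ (forall a, tdeg t a <= 3) /\
  {in leaves t, forall l, beta l \in arcs E} /\
  {in leaves t &, injective beta} /\
  (forall e, e \in arcs E -> exists2 l, l \in leaves t & beta l = e).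

Definition side_leaves (n : nat) (t : rel 'I_n.+1) (a b : 'I_n.+1)
  : {set 'I_n.+1} := [set l in leaves t | connect (del_edge t a b) a l].

Definition edge_width (V : finType) (E : rel V)
    (n : nat) (t : rel 'I_n.+1) (beta : 'I_n.+1 -> V * V) (a b : 'I_n.+1)
  : nat :=
  let X := beta @: side_leaves t a b in
  #|SV E X :|: SV E (arcs E :\: X)|.

(* width of (T,beta): max over tree edges, 0 if there is none *)
Definition decomp_width (V : finType) (E : rel V)
    (n : nat) (t : rel 'I_n.+1) (beta : 'I_n.+1 -> V * V) : nat :=
  \max_(p : 'I_n.+1 * 'I_n.+1 | t p.1 p.2) edge_width E t beta p.1 p.2.

(* k is the width of some branch decomposition of D (or D has no edges and
   k = 0, the convention for the edgeless digraph) *)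
Definition dbw_attained (V : finType) (E : rel V) (k : nat) : Prop :=
  (arcs E = set0 /\ k = 0) \/
  exists n (t : rel 'I_n.+1) (beta : 'I_n.+1 -> V * V),
    branch_decomp E t beta /\ decomp_width E t beta = k.

Definition dbw (V : finType) (E : rel V) : nat :=
  epsilon (inhabits 0%N)
    (fun k => dbw_attained E k /\ forall j, dbw_attained E j -> k <= j).

(* intermediate digraphs living inside the vertex type V of D:
   a vertex set and an edge set *)
Definition sdigraph (V : finType) : Type := ({set V} * {set V * V})%type.

Definition outN (V : finType) (B : {set V * V}) (x : V) : {set V} :=
  [set z | (x, z) \in B].
Definition inN (V : finType) (B : {set V * V}) (y : V) : {set V} :=
  [set u | (u, y) \in B].

Definition butterfly_edge (V : finType) (G : sdigraph V) (x y : V) : bool :=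
  [&& (x, y) \in G.2, #|outN G.2 x| == 1 & #|inN G.2 y| == 1].

(* contraction of xy; the new vertex is named x (y is deleted) *)
Definition contract (V : finType) (G : sdigraph V) (x y : V) : sdigraph V :=
  let B := G.2 in
  let Nin := (inN B x :|: inN B y) :\: [set x; y] in
  let Nout := (outN B x :|: outN B y) :\: [set x; y] in
  (G.1 :\ y,
   [set p in B | (p.1 \notin [set x; y]) && (p.2 \notin [set x; y])]
     :|: [set (u, x) | u in Nin] :|: [set (x, w) | w in Nout]).

Inductive contracts (V : finType) : sdigraph V -> sdigraph V -> Prop :=
  | contracts_refl G : contracts G G
  | contracts_step G x y G' :
      butterfly_edge G x y -> contracts (contract G x y) G' -> contracts G G'.

(* H = (W,F) is a butterfly minor of D = (V,E): H is isomorphic to a digraph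
   obtained from a subgraph of D by a sequence of butterfly contractions *)
Definition butterfly_minor (W : finType) (F : rel W) (V : finType) (E : rel V)
  : Prop :=
  exists (A : {set V}) (B : {set V * V}),
    B \subset arcs E /\ (forall p, p \in B -> (p.1 \in A) && (p.2 \in A)) /\
    exists G' : sdigraph V, contracts (A, B) G' /\
      exists f : W -> V,
        injective f /\ (forall v, v \in G'.1 <-> exists w, f w = v) /\
        (forall u w, F u w = ((f u, f w) \in G'.2)).

(* Main.v *)
Require Import Defs.
From mathcomp Require Import all_boot zify.
From Stdlib Require Import ClassicalEpsilon Classical.
Set Implicit Arguments. Unset Strict Implicit. Unset Printing Implicit Defensive.

Section Relaxed.
Variable T : finType.

Definition delT (t : rel T) (a b : T) : rel T :=
  fun u v => t u v && ~~ (((u == a) && (v == b)) || ((u == b) && (v == a))).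

Definition treeT (t : rel T) : Prop :=
  symmetric t /\ irreflexive t /\
  (forall u v, connect t u v) /\
  (forall a b, t a b -> ~~ connect (delT t a b) a b).

Definition degT (t : rel T) (a : T) : nat := #|[set b | t a b]|.

Variable VT : finType.

Definition SB (B X : {set VT * VT}) : {set VT} :=
  [set y | [exists x, exists z, ((x, y) \in B :\: X) && ((y, z) \in X)]].

Definition rX (t : rel T) (lab : T -> option (VT * VT)) (a b : T) : {set VT * VT} :=
  [set e | [exists l, connect (delT t a b) a l && (lab l == Some e)]].

Definition rw (B : {set VT * VT}) t lab a b :=
  #|SB B (rX t lab a b) :|: SB B (B :\: rX t lab a b)|.

Definition rdec (B : {set VT * VT}) (t : rel T) (lab : T -> option (VT * VT)) (k : nat) :=
  treeT t /\ (forall a, degT t a <= 3) /\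
  (forall a, lab a != None -> degT t a <= 1) /\
  (forall a b e, lab a = Some e -> lab b = Some e -> a = b) /\
  (forall e, (e \in B) <-> exists a, lab a = Some e) /\
  (forall a b, t a b -> rw B t lab a b <= k).

End Relaxed.

Definition RD (VT : finType) (B : {set VT * VT}) (k : nat) :=
  exists n (t : rel 'I_n.+1) lab, rdec B t lab k.

Section Step.
Variables (VT U : finType) (B : {set VT * VT}) (B' : {set U * U}).
Variables (g : VT * VT -> option (U * U)) (f : VT -> U).

Definition gimg (X : {set VT * VT}) : {set U * U} :=
  [set e2 | [exists e, (e \in X) && (g e == Some e2)]].

Hypothesis g1 : forall e e' e2, e \in B -> e' \in B -> g e = Some e2 -> g e' = Some e2 -> e = e'.
Hypothesis g2 : forall e2, e2 \in B' <-> exists2 e, e \in B & g e = Some e2.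
Hypothesis g3 : forall X : {set VT * VT}, X \subset B -> SB B' (gimg X) \subset f @: SB B X.

Lemma gimg_compl (X : {set VT * VT}) : X \subset B -> B' :\: gimg X = gimg (B :\: X).
Proof.
move=> XB; apply/setP => e2; rewrite !inE.
apply/andP/existsP.
- move=> [/existsP Hn /g2 [e eB ge]]; exists e; rewrite !inE eB ge eqxx !andbT.
  apply/negP => eX; apply: Hn; exists e; by rewrite eX ge eqxx.
- move=> [e /andP[]]; rewrite !inE => /andP[eX eB] /eqP ge; split.
  + apply/existsP => -[e' /andP[e'X /eqP ge']].
    have e'B : e' \in B by apply: (subsetP XB).
    by move: eX; rewrite -(g1 e'B eB ge' ge) e'X.
  + by apply/g2; exists e.
Qed.

Lemma step_rdec (T : finType) (t : rel T) lab k :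
  rdec B t lab k -> rdec B' t (fun a => obind g (lab a)) k.
Proof.
move=> [tr [d3 [lf [inj [img wd]]]]].
split; first done. split; first done. split.
  by move=> a; case E: (lab a) => [e|] //= _; apply: lf; rewrite E.
split.
  move=> a b e2; case Ea: (lab a) => [ea|] //=; case Eb: (lab b) => [eb|] //= ga gb.
  have eaB : ea \in B by apply/img; exists a.
  have ebB : eb \in B by apply/img; exists b.
  have := g1 eaB ebB ga gb => eab; subst eb.
  by apply: (inj _ _ ea).
split.
  move=> e2; split.
  - move=> /g2 [e eB ge]; have [a Ha] := (proj1 (img e) eB).
    by exists a; rewrite Ha.
  - move=> [a]; case Ea: (lab a) => [e|] //= ge; apply/g2; exists e => //.
    by apply/img; exists a.
move=> a b tab.
have XB : rX t lab a b \subset B.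
  apply/subsetP => e; rewrite inE => /existsP [l /andP[_ /eqP Hl]].
  by apply/img; exists l.
rewrite /rw.
have -> : rX t (fun a => obind g (lab a)) a b = gimg (rX t lab a b).
  apply/setP => e2; rewrite !inE; apply/existsP/existsP.
  - move=> [l /andP[cl]]; case El: (lab l) => [e|] //= /eqP ge.
    exists e; rewrite ge eqxx andbT inE; apply/existsP; exists l.
    by rewrite cl El eqxx.
  - move=> [e /andP[]]; rewrite inE => /existsP [l /andP[cl /eqP El]] /eqP ge.
    by exists l; rewrite cl El /= ge eqxx.
rewrite gimg_compl //.
apply: leq_trans (wd a b tab); rewrite /rw.
apply: leq_trans (leq_imset_card f _).
apply: subset_leq_card; rewrite imsetU; apply: setUSS; apply: g3 => //.
exact: subsetDl.
Qed.

Lemma step_RD k : RD B k -> RD B' k.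
Proof. by move=> [n [t [lab H]]]; exists n, t, (fun a => obind g (lab a)); apply: step_rdec. Qed.

End Step.


Lemma RD_sub (V : finType) (E : rel V) (B : {set V * V}) k :
  B \subset arcs E -> RD (arcs E) k -> RD B k.
Proof.
move=> BE; apply: (@step_RD _ _ (arcs E) B (fun e => if e \in B then Some e else None) id).
- by move=> e e' e2 _ _; case: ifP => // _ [<-]; case: ifP => // _ [<-].
- move=> e2; split; first by move=> H; exists e2; [apply: (subsetP BE) | rewrite H].
  by move=> [e _]; case: ifP => // eB [<-].
- move=> X XB; apply/subsetP => y; rewrite inE => /existsP[x /existsP[z /andP[]]].
  rewrite !inE => /andP[Hn xyB] /existsP[e /andP[eX]].
  case: ifP => // eB /eqP[Hee]; subst e.
  apply/imsetP; exists y => //; rewrite inE; apply/existsP; exists x; apply/existsP; exists z.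
  rewrite eX andbT in_setD (subsetP BE _ xyB) andbT; apply/negP => xyX.
  by move/existsP: Hn; apply; exists (x, y); rewrite xyX xyB eqxx.
Qed.

Lemma mem_imset_l (V : finType) (A : {set V}) (c a b : V) :
  ((a, b) \in [set (u, c) | u in A]) = (b == c) && (a \in A).
Proof.
apply/imsetP/andP => [[u uA [-> ->]]|[/eqP -> aA]]; first by rewrite eqxx.
by exists a.
Qed.

Lemma mem_imset_r (V : finType) (A : {set V}) (c a b : V) :
  ((a, b) \in [set (c, w) | w in A]) = (a == c) && (b \in A).
Proof.
apply/imsetP/andP => [[u uA [-> ->]]|[/eqP -> aA]]; first by rewrite eqxx.
by exists b.
Qed.

Section Contract.
Variables (V : finType) (G : sdigraph V) (x y : V).
Hypothesis noloop : forall p, p \in G.2 -> p.1 != p.2.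
Hypothesis bf : butterfly_edge G x y.

Let B := G.2.
Let r v := if v == y then x else v.
Let g (e : V * V) := if r e.1 == r e.2 then None else Some (r e.1, r e.2).

Lemma bf_xy : (x, y) \in B. Proof. by case/and3P: bf. Qed.
Lemma bf_neq : x != y. Proof. exact: (noloop bf_xy). Qed.
Lemma bf_out w : (x, w) \in B -> w = y.
Proof.
case/and3P: bf => xy /cards1P [z Hz] _ H.
have : y \in outN B x by rewrite inE.
have : w \in outN B x by rewrite inE.
by rewrite Hz !inE => /eqP -> /eqP ->.
Qed.
Lemma bf_in u : (u, y) \in B -> u = x.
Proof.
case/and3P: bf => xy _ /cards1P [z Hz] H.
have : x \in inN B y by rewrite inE.
have : u \in inN B y by rewrite inE.
by rewrite Hz !inE => /eqP -> /eqP ->.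
Qed.

Lemma g_some e p : g e = Some p -> r e.1 = p.1 /\ r e.2 = p.2 /\ r e.1 != r e.2.
Proof. by rewrite /g; case: ifP => // /negbT H [<-]. Qed.

Lemma r_y v : (r v == y) = false.
Proof. rewrite /r; case: ifP => [_|/negbT/eqP H]; last by apply/eqP.
by apply/negbTE; exact: bf_neq. Qed.

Lemma r_id v : v != y -> r v = v.
Proof. by rewrite /r => /negbTE ->. Qed.
Lemma rx : r x = x. Proof. apply: r_id; exact: bf_neq. Qed.
Lemma ry : r y = x. Proof. by rewrite /r eqxx. Qed.

Lemma contr_g1 e e' e2 : e \in B -> e' \in B -> g e = Some e2 -> g e' = Some e2 -> e = e'.
Proof.
case: e => a b; case: e' => a' b' /= eB e'B /g_some[/= h1 [h2 h3]] /g_some[/= h1' [h2' h3']].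
have Ha : a = a'.
  case: (eqVneq a y) => ay; case: (eqVneq a' y) => a'y.
  - by rewrite ay a'y.
  - subst a; move: h1'; rewrite -h1 /r eqxx (negbTE a'y) => a'x; subst a'.
    by move: h3'; rewrite (bf_out e'B) rx ry eqxx.
  - subst a'; move: h1; rewrite -h1' /r eqxx (negbTE ay) => ax; subst a.
    by move: h3; rewrite (bf_out eB) rx ry eqxx.
  - by move: h1; rewrite -h1' !r_id.
have Hb : b = b'.
  case: (eqVneq b y) => bx; case: (eqVneq b' y) => b'x.
  - by rewrite bx b'x.
  - subst b; have := bf_in eB => ax; rewrite ax in h3.
    by move: h3; rewrite rx ry eqxx.
  - subst b'; have := bf_in e'B => ax; rewrite ax in h3'.
    by move: h3'; rewrite rx ry eqxx.
  - by move: h2; rewrite -h2' !r_id.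
by rewrite Ha Hb.
Qed.

Lemma contr_g2 e2 : e2 \in (contract G x y).2 <-> exists2 e, e \in B & g e = Some e2.
Proof.
case: e2 => a b; rewrite /contract /= !inE mem_imset_l mem_imset_r !inE.
split.
- case/orP => [/orP[|]|].
  + move=> /andP[ab /andP[ha hb]]; exists (a, b) => //.
    move: ha hb; rewrite !negb_or => /andP[ax ay] /andP[bx b_y].
    rewrite /g /= !r_id //; have := noloop ab => /= /negbTE ->; done.
  + move=> /andP[/eqP -> /andP[/norP[ax ay] /orP[uB|uB]]].
    * exists (a, x) => //; rewrite /g /= !r_id ?(negbTE ax) //; exact: bf_neq.
    * by move: ax; rewrite (bf_in uB) eqxx.
  + move=> /andP[/eqP -> /andP[/norP[bx b_y] /orP[uB|uB]]].
    * by move: b_y; rewrite (bf_out uB) eqxx.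
    * exists (y, b) => //; rewrite /g /= [r y]/r eqxx r_id //.
      by rewrite eq_sym (negbTE bx).
- move=> [[c d] cdB] /g_some /= [h1 [h2 h3]]; subst a b.
  case: (eqVneq c y) => cy; case: (eqVneq d y) => dy.
  + by move: h3; rewrite cy dy eqxx.
  + subst c; have dx : d != x.
      by apply/eqP => dx; move: h3; rewrite dx rx ry eqxx.
    rewrite ry !r_id // !eqxx /= (negbTE dx) (negbTE dy) cdB !orbT //.
  + subst d; by move: h3; rewrite (bf_in cdB) rx ry eqxx.
  + case: (eqVneq c x) => cx; case: (eqVneq d x) => dx.
    * by move: (noloop cdB); rewrite /= cx dx eqxx.
    * by move: dy; rewrite cx in cdB; rewrite (bf_out cdB) eqxx.
    * subst d; rewrite !r_id // !eqxx (negbTE cx) (negbTE cy) cdB /= ?orbT //.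
    * rewrite !r_id // (negbTE cx) (negbTE cy) (negbTE dx) (negbTE dy) cdB //.
Qed.

Lemma contr_g3 (X : {set V * V}) : X \subset B ->
  SB (contract G x y).2 (gimg g X) \subset r @: SB B X.
Proof.
move=> XB; apply/subsetP => v; rewrite inE => /existsP[u /existsP[w /andP[]]].
rewrite in_setD => /andP[Hn /(proj1 (contr_g2 _)) [[a' b'] e'B ge']].
rewrite inE => /existsP[[a b] /andP[eX /eqP ge]].
rewrite inE in Hn.
have e'X : (a', b') \notin X.
  by apply/negP => H; move/existsP: Hn; apply; exists (a', b'); rewrite H ge' eqxx.
have eB : (a, b) \in B by apply: (subsetP XB).
move: (g_some ge') (g_some ge) => /= [h1' [h2' _]] [h1 [h2 _]].
have inS c d d' : (d', c) \in B -> (d', c) \notin X -> (c, d) \in X -> c \in SB B X.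
  move=> H1 H2 H3; rewrite inE; apply/existsP; exists d'; apply/existsP; exists d.
  by rewrite !inE H1 H2 H3.
case: (eqVneq b' a) => hba.
  subst b'; apply/imsetP; exists a; first exact: (inS _ b a').
  by rewrite h1.
case: (eqVneq a y) => ay.
  subst a; have b'x : b' = x.
    case: (eqVneq b' y) => b'y; first by rewrite b'y eqxx in hba.
    by move: h2'; rewrite -h1 r_id // /r eqxx.
  subst b'; case: (boolP ((x, y) \in X)) => xyX.
  - apply/imsetP; exists x; first exact: (inS _ y a').
    by rewrite -h2' r_id //; exact: bf_neq.
  - apply/imsetP; exists y; first exact: (inS _ b x bf_xy).
    by rewrite -h1.
case: (eqVneq b' y) => b'y.
  subst b'; have a'x := bf_in e'B; subst a'.
  have ax : a = x by move: h1; rewrite -h2' r_id // /r eqxx.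
  subst a; have := bf_out eB => by_; subst b.
  by rewrite eX in e'X.
by move: h1; rewrite -h2' !r_id // => H; rewrite H eqxx in hba.
Qed.

Lemma RD_contract k : RD B k -> RD (contract G x y).2 k.
Proof.
apply: (@step_RD _ _ B _ g r); [exact: contr_g1 | exact: contr_g2 | exact: contr_g3].
Qed.

Lemma contract_inv : (forall p, p \in G.2 -> (p.1 \in G.1) && (p.2 \in G.1)) ->
  forall p, p \in (contract G x y).2 ->
    [&& p.1 \in (contract G x y).1, p.2 \in (contract G x y).1 & p.1 != p.2].
Proof.
move=> HA [a b] /contr_g2 [[c d] cdB] /g_some /= [h1 [h2 h3]]; subst a b.
rewrite h3 andbT /= !inE !r_y /=.
have xA : x \in G.1 by case/andP: (HA _ bf_xy).
case/andP: (HA _ cdB) => /= cA dA.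
by apply/andP; split; rewrite /r; case: ifP.
Qed.

End Contract.

Section Iso.
Variables (V W : finType) (A : {set V}) (B : {set V * V}) (F : rel W) (f : W -> V).
Hypothesis finj : injective f.
Hypothesis fim : forall v, v \in A <-> exists w, f w = v.
Hypothesis fF : forall u w, F u w = ((f u, f w) \in B).
Hypothesis BA : forall p, p \in B -> (p.1 \in A) && (p.2 \in A).
Variable w0 : W.

Let finv v := odflt w0 [pick w | f w == v].
Lemma finvK w : finv (f w) = w.
Proof.
rewrite /finv; case: pickP => [w' /eqP /finj -> //|/(_ w)]; by rewrite eqxx.
Qed.

Lemma Bform p : p \in B -> exists a b, p = (f a, f b).
Proof.
case: p => c d /BA /= /andP[/fim [a <-] /fim [b <-]]; by exists a, b.
Qed.

Lemma RD_iso k : RD B k -> RD (arcs F) k.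
Proof.
apply: (@step_RD _ _ B _ (fun e => Some (finv e.1, finv e.2)) finv).
- move=> e e' e2 /Bform [a [b ->]] /Bform [a' [b' ->]] /= [<-] [].
  by rewrite !finvK => -> ->.
- move=> [a b]; rewrite inE /= fF; split.
  + by move=> H; exists (f a, f b) => //=; rewrite !finvK.
  + move=> [e eB H]; case/Bform: (eB) => c [d E]; subst e.
    by case: H; rewrite !finvK => <- <-.
- move=> X XB; apply/subsetP => v; rewrite inE => /existsP[u /existsP[w /andP[]]].
  rewrite !inE /= => /andP[Hn]; rewrite fF => uvB /existsP[e /andP[eX /eqP ge]].
  have eB : e \in B by apply: (subsetP XB).
  case/Bform: eB => c [d E]; subst e; case: ge; rewrite !finvK => cv dw; subst c d.
  apply/imsetP; exists (f v); last by rewrite finvK.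
  rewrite inE; apply/existsP; exists (f u); apply/existsP; exists (f w).
  rewrite !inE uvB eX !andbT; apply/negP => H.
  by move/existsP: Hn; apply; exists (f u, f v); rewrite H /= !finvK eqxx.
Qed.
End Iso.


Lemma avoid (T : finType) (r : rel T) u a b : symmetric r -> #|[set c | r u c]| <= 1 ->
  a != u -> b != u -> connect r a b -> exists p, [/\ path r a p, last a p = b & u \notin p].
Proof.
move=> sr du au bu /connectP [p pth lst]; subst b.
case: (shortenP pth) bu => p' pth' uq _ bu.
exists p'; split => //; apply/negP => up.
move: pth' uq bu; case/splitPr: up => p1 p2.
case: p2 => [|s p3].
  by rewrite last_cat /= eqxx.
rewrite cat_path => /andP[_] /= /and3P[r1 r2 _].
move=> uq0 _; have : uniq ((a :: p1) ++ [:: u, s & p3]) by []. rewrite cat_uniq => /and3P[_ H _].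
have Hs : s \notin a :: p1.
  apply/negP => sin; move/negP: H; apply; apply/hasP; exists s => //.
  by rewrite !inE eqxx orbT.
have neq : last a p1 != s.
  by apply/eqP => E; move: Hs; rewrite -E mem_last.
have : #|[set last a p1; s]| <= #|[set c | r u c]|.
  apply: subset_leq_card; apply/subsetP => c; rewrite !inE => /orP[] /eqP ->.
  - by rewrite sr.
  - done.
by rewrite cards2 neq => /leq_trans /(_ du).
Qed.

Lemma connect_lift n (r : rel 'I_n.+2) u : symmetric r -> #|[set c | r u c]| <= 1 ->
  forall i j, connect (fun i j => r (lift u i) (lift u j)) i j = connect r (lift u i) (lift u j).
Proof.
move=> sr du i j; apply/idP/idP.
- move=> /connectP [p pth lst]; apply/connectP; exists (map (lift u) p).
  + by rewrite path_map.
  + by rewrite last_map lst.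
- have hi v : lift u v != u by rewrite eq_sym neq_lift.
  move=> /(avoid sr du (hi i) (hi j)) [q [pth lst uq]].
  pose h v := odflt ord0 (unlift u v).
  have hq : map (lift u) (map h q) = q.
    rewrite -map_comp map_id_in // => v vq /=; rewrite /h.
    case: unliftP => [v' -> //|E]; by rewrite -E vq in uq.
  apply/connectP; exists (map h q).
  + by rewrite -path_map hq.
  + apply: (@lift_inj _ u); by rewrite -last_map hq lst.
Qed.

Lemma delT_sym (T : finType) (t : rel T) a b : symmetric t -> symmetric (delT t a b).
Proof.
move=> s v w; rewrite /delT s; congr (_ && ~~ _).
by case: (v == a); case: (v == b); case: (w == a); case: (w == b).
Qed.

Lemma deg_delT (T : finType) (t : rel T) a b c :
  #|[set d | delT t a b c d]| <= #|[set d | t c d]|.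
Proof. by apply: subset_leq_card; apply/subsetP => d; rewrite !inE => /andP[]. Qed.

Lemma deg_lift n (t : rel 'I_n.+2) u i :
  degT (fun i j => t (lift u i) (lift u j)) i <= degT t (lift u i).
Proof.
rewrite /degT -(card_imset _ (@lift_inj _ u)); apply: subset_leq_card.
by apply/subsetP => c /imsetP[j]; rewrite inE => H ->; rewrite inE.
Qed.

Lemma restrict_rdec n (VT : finType) (B : {set VT * VT}) (t : rel 'I_n.+2) lab k u :
  rdec B t lab k -> lab u = None -> degT t u <= 1 ->
  rdec B (fun i j => t (lift u i) (lift u j)) (fun i => lab (lift u i)) k.
Proof.
move=> [[sy [irr [con br]]] [d3 [lf [inj [img wd]]]]] lu du.
have dl a b : #|[set c | delT t a b u c]| <= 1 := leq_trans (deg_delT _ _ _ _) du.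
split.
  split; first by move=> i j; exact: sy.
  split; first by move=> i; exact: irr.
  split; first by move=> i j; rewrite connect_lift.
  move=> i j tij.
  rewrite (@eq_connect _ _ (fun v w => delT t (lift u i) (lift u j) (lift u v) (lift u w))).
    rewrite connect_lift; [exact: br | exact: delT_sym | exact: dl].
  by move=> v w /=; rewrite /delT !(inj_eq lift_inj).
split; first by move=> a; exact: leq_trans (deg_lift _ _ _) (d3 _).
split; first by move=> a la; exact: leq_trans (deg_lift _ _ _) (lf _ la).
split; first by move=> a b e la lb; apply: lift_inj; exact: inj la lb.
split.
  move=> e; split => [/img [a la]|[a la]]; last by apply/img; exists (lift u a).
  move: la; case: (unliftP u a) => [a' ->|->] la; first by exists a'.
  by rewrite lu in la.
move=> i j tij; rewrite /rw.
suff -> : rX (fun i j => t (lift u i) (lift u j)) (fun i => lab (lift u i)) i j =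
          rX t lab (lift u i) (lift u j) by exact: (wd _ _ tij).
apply/setP => e; rewrite !inE; apply/existsP/existsP => [[l /andP[cl le]]|[l /andP[cl le]]].
- exists (lift u l); rewrite le andbT.
  move: cl; rewrite (@eq_connect _ _ (fun v w => delT t (lift u i) (lift u j) (lift u v) (lift u w))).
    by rewrite connect_lift //; (exact: delT_sym || exact: dl).
  by move=> v w /=; rewrite /delT !(inj_eq lift_inj).
- move: cl le; case: (unliftP u l) => [l' ->|->] cl le; last by rewrite lu in le.
  exists l'; rewrite le andbT.
  rewrite (@eq_connect _ _ (fun v w => delT t (lift u i) (lift u j) (lift u v) (lift u w))).
    by rewrite connect_lift //; (exact: delT_sym || exact: dl).
  by move=> v w /=; rewrite /delT !(inj_eq lift_inj).
Qed.


Lemma build (V : finType) (E : rel V) n (t : rel 'I_n.+1) lab k e0 :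
  rdec (arcs E) t lab k -> (forall a, degT t a <= 1 -> lab a != None) ->
  branch_decomp E t (fun a => odflt e0 (lab a)) /\
  decomp_width E t (fun a => odflt e0 (lab a)) <= k.
Proof.
move=> [tr [d3 [lf [inj [img wd]]]]] lv.
have lfE a : (a \in leaves t) = (lab a != None).
  rewrite inE; apply/idP/idP; [exact: lv | exact: lf].
split.
  split; first exact: tr.
  split; first exact: d3.
  split.
    move=> l; rewrite lfE; case El: (lab l) => [e|] //= _; apply/img; by exists l.
  split.
    move=> a b; rewrite !lfE; case Ea: (lab a) => [ea|] //; case Eb: (lab b) => [eb|] //= _ _ H.
    by subst eb; exact: inj Ea Eb.
  move=> e /img [a la]; exists a; last by rewrite la.
  by rewrite lfE la.
apply/bigmax_leqP => [[a b]] /= tab.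
have := wd a b tab; rewrite /rw /edge_width.
suff -> : (fun a => odflt e0 (lab a)) @: side_leaves t a b = rX t lab a b by [].
apply/setP => e; rewrite inE; apply/imsetP/existsP.
- move=> [l]; rewrite inE lfE => /andP[ll cl] ->; exists l.
  rewrite cl /=; by case: (lab l) ll.
- move=> [l /andP[cl /eqP le]]; exists l; last by rewrite le.
  by rewrite inE lfE le cl.
Qed.

Definition realdec (V : finType) (E : rel V) k :=
  exists m (t' : rel 'I_m.+1) beta, branch_decomp E t' beta /\ decomp_width E t' beta <= k.

Lemma prune (V : finType) (E : rel V) k : forall n (t : rel 'I_n.+1) lab,
  rdec (arcs E) t lab k -> arcs E != set0 -> realdec E k.
Proof.
elim => [|n IH] t lab H ne; case/set0Pn: ne => e0 e0in.
- case: (boolP [exists u, (lab u == None) && (degT t u <= 1)]).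
  + move=> /existsP [u /andP[/eqP lu _]].
    have [a la] := proj1 ((proj1 (proj2 (proj2 (proj2 (proj2 H))))) e0) e0in.
    by move: la; rewrite (ord1 a) -(ord1 u) lu.
  + move=> /existsPn Hn; exists 0, t, (fun a => odflt e0 (lab a)).
    apply: build H _ => a da; move: (Hn a); rewrite da andbT; done.
- case: (boolP [exists u, (lab u == None) && (degT t u <= 1)]).
  + move=> /existsP [u /andP[/eqP lu du]].
    apply: (IH _ _ (restrict_rdec H lu du)).
    by apply/set0Pn; exists e0.
  + move=> /existsPn Hn; exists n.+1, t, (fun a => odflt e0 (lab a)).
    apply: build H _ => a da; move: (Hn a); rewrite da andbT; done.
Qed.


Lemma connect_inv (T : finType) (r : rel T) (P : T -> Prop) x y :
  (forall v w, r v w -> P v -> P w) -> connect r x y -> P x -> P y.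
Proof.
move=> H /connectP [p pth ->]; elim: p x pth => [|z p IH] x //= /andP[rxz pth] Px.
by apply: IH pth _; exact: H rxz Px.
Qed.

Definition par (i : nat) := i.-1 %/ 2.

Lemma iter_par_le k x : iter k par x <= x.
Proof. elim: k => [|k IH] //=; apply: leq_trans _ IH; rewrite {1}/par; lia. Qed.

Lemma ord_eq_inord n (j : 'I_n.+1) x : nat_of_ord j = x -> j = inord x.
Proof. by move=> <-; rewrite inord_val. Qed.

Section Heap.
Variable m : nat.
Definition ht : rel 'I_(m.*2.+2) :=
  fun i j => ((nat_of_ord i != 0) && (par i == nat_of_ord j)) || ((nat_of_ord j != 0) && (par j == nat_of_ord i)).

Lemma ht_sym : symmetric ht.
Proof. by move=> i j; rewrite /ht orbC. Qed.

Lemma ht_irr : irreflexive ht.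
Proof. move=> i; rewrite /ht orbb /par; apply/negP; lia. Qed.

Lemma ht_conn0 (i : 'I_(m.*2.+2)) : connect ht i ord0.
Proof.
suff H : forall k (i : 'I_(m.*2.+2)), nat_of_ord i <= k -> connect ht i ord0 by exact: H.
elim => [|k IH] {}i hi.
  by have -> : i = ord0 by apply: val_inj => /=; lia.
case: (eqVneq (nat_of_ord i) 0) => i0.
  by have -> : i = ord0 by apply: val_inj.
have pl : par i < m.*2.+2 by rewrite /par; have := ltn_ord i; lia.
apply: connect_trans (IH (Ordinal pl) _); last by rewrite /= /par; lia.
by apply: connect1; rewrite /ht i0 eqxx.
Qed.

Lemma ht_conn u v : connect ht u v.
Proof.
apply: connect_trans (ht_conn0 u) _.
by rewrite (sym_connect_sym ht_sym); exact: ht_conn0.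
Qed.

Lemma ht_bridge0 a b : nat_of_ord a != 0 -> par a = nat_of_ord b -> ~~ connect (delT ht a b) a b.
Proof.
move=> a0 pab; apply/negP => C.
have := @connect_inv _ _ (fun v => exists k, iter k par (nat_of_ord v) = nat_of_ord a) _ _ _ C.
case.
- move=> v w; rewrite /delT /ht => /andP[/orP[/andP[v0 /eqP pv]|/andP[w0 /eqP pw]] Hn] [k hk].
  + case: k hk => [|k] /= hk.
      have va : v = a by apply: val_inj.
      have wb : w = b by apply: val_inj; rewrite /= -pv -pab va.
      by move: Hn; rewrite va wb !eqxx.
    by exists k; rewrite -pv -iterSr.
  + by exists k.+1; rewrite iterSr pw.
- by exists 0.
- move=> k hk; have := iter_par_le k (nat_of_ord b); rewrite hk -pab /par; lia.
Qed.

Lemma ht_bridge a b : ht a b -> ~~ connect (delT ht a b) a b.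
Proof.
rewrite {1}/ht => /orP[/andP[a0 /eqP pab]|/andP[b0 /eqP pba]]; first exact: ht_bridge0.
have E : delT ht a b =2 delT ht b a.
  move=> v w; rewrite /delT; congr (_ && ~~ _).
  by case: (v == a); case: (v == b); case: (w == a); case: (w == b).
rewrite (eq_connect E) (sym_connect_sym (delT_sym _ _ ht_sym)).
exact: ht_bridge0.
Qed.

Lemma ht_nb i j : ht i j -> [|| nat_of_ord j == par i, nat_of_ord j == (nat_of_ord i).*2.+1 | nat_of_ord j == (nat_of_ord i).*2.+2].
Proof. rewrite /ht /par; lia. Qed.

Lemma ht_deg3 i : degT ht i <= 3.
Proof.
pose s := [:: inord (par i); inord (nat_of_ord i).*2.+1; inord (nat_of_ord i).*2.+2] : seq 'I_(m.*2.+2).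
apply: (@leq_trans #|s|); last exact: card_size.
apply: subset_leq_card; apply/subsetP => j; rewrite inE => /ht_nb.
by case/or3P => /eqP /ord_eq_inord ->; rewrite !inE eqxx ?orbT.
Qed.

Lemma ht_leaf i : m < nat_of_ord i -> degT ht i <= 1.
Proof.
move=> mi.
apply: (@leq_trans #|[:: inord (par i) : 'I_(m.*2.+2)]|); last exact: card_size.
apply: subset_leq_card; apply/subsetP => j; rewrite inE => /ht_nb.
move=> H; have := ltn_ord j.
case/or3P: H => /eqP E; first by rewrite (ord_eq_inord E) !inE eqxx.
- lia.
- lia.
Qed.
End Heap.

Lemma exists_real (V : finType) (E : rel V) : arcs E != set0 -> realdec E #|V|.
Proof.
move=> ne; have /set0Pn [e0 e0in] := ne.
pose s := enum (arcs E).
have ss : size s = #|arcs E| by rewrite /s -cardE.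
have : 0 < #|arcs E| by rewrite card_gt0.
case Em : #|arcs E| => [|m] // _.
pose lab (i : 'I_(m.*2.+2)) :=
  if m < nat_of_ord i then Some (nth e0 s (nat_of_ord i - m.+1)) else None.
apply: (@prune V E #|V| (m.*2.+1) (@ht m) lab _ ne).
split; first by split; [exact: ht_sym | split; [exact: ht_irr | split; [exact: ht_conn | exact: ht_bridge]]].
split; first exact: ht_deg3.
split; first by move=> a; rewrite /lab; case: ifP => // H _; exact: ht_leaf.
split.
  move=> a b e; rewrite /lab; case: ifP => // ha [<-]; case: ifP => // hb [].
  have la := ltn_ord a; have lb := ltn_ord b.
  move/eqP; rewrite nth_uniq ?enum_uniq ?ss ?Em; try lia.
  by move=> /eqP H; apply: ord_inj; lia.
split.
  move=> e; split.
  - move=> ein; have ie : index e s < m.+1 by rewrite -Em -ss index_mem mem_enum.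
    exists (inord (index e s + m.+1)); rewrite /lab inordK; last by lia.
    rewrite ifT; last by lia.
    by rewrite addnK nth_index // mem_enum.
  - move=> [a]; rewrite /lab; case: ifP => // ha [<-].
    rewrite -mem_enum; apply: mem_nth; rewrite ss Em; have := ltn_ord a; lia.
by move=> a b _; exact: max_card.
Qed.

Lemma min_exists (P : nat -> Prop) j : P j -> exists k, P k /\ forall i, P i -> k <= i.
Proof.
elim/ltn_ind: j => j IH Pj.
case: (classic (exists i, i < j /\ P i)) => [[i [ij Pi]]|H]; first exact: IH ij Pi.
exists j; split => // i Pi; rewrite leqNgt; apply/negP => ij; apply: H; by exists i.
Qed.

Lemma dbw_spec (V : finType) (E : rel V) :
  dbw_attained E (dbw E) /\ forall j, dbw_attained E j -> dbw E <= j.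
Proof.
pose P k := dbw_attained E k /\ forall j, dbw_attained E j -> k <= j.
change (P (epsilon (inhabits 0%N) P)); apply: epsilon_spec.
have [j Pj] : exists j, dbw_attained E j.
  case: (eqVneq (arcs E) set0) => H; first by exists 0; left.
  have [m [t [beta [bd _]]]] := exists_real H.
  by exists (decomp_width E t beta); right; exists m, t, beta.
exact: min_exists Pj.
Qed.

Lemma dbw_le (V : finType) (E : rel V) k : realdec E k -> dbw E <= k.
Proof.
move=> [m [t [beta [bd w]]]]; apply: leq_trans w.
apply: (proj2 (dbw_spec E)); right; by exists m, t, beta.
Qed.

Lemma dbw_le0 (V : finType) (E : rel V) : arcs E = set0 -> dbw E <= 0.
Proof. move=> H; apply: (proj2 (dbw_spec E)); by left. Qed.


Lemma RD_of_dbw (V : finType) (E : rel V) : RD (arcs E) (dbw E).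
Proof.
case: (proj1 (dbw_spec E)) => [[H0 ->]|[n [t [beta [[tr [d3 [lbe [inj sur]]]] w]]]]].
  exists 0, (fun _ _ => false), (fun _ => None).
  split.
    split => //; split => //; split => // u v.
    by rewrite (ord1 u) (ord1 v) connect0.
  split; first by move=> a; apply: leq_trans (max_card _) _; rewrite card_ord.
  split => //; split => //; split => // e; rewrite H0 in_set0; split => // [[]] //.
exists n, t, (fun l => if l \in leaves t then Some (beta l) else None).
split => //; split => //.
split; first by move=> a; case: ifP => //; rewrite inE.
split; first by move=> a b e; case: ifP => // la [<-]; case: ifP => // lb [Eb]; exact: inj la lb (esym Eb).
split.
  move=> e; split.
  - by move=> /sur [l ll <-]; exists l; rewrite ll.
  - by move=> [a]; case: ifP => // la [<-]; exact: lbe.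
move=> a b tab; rewrite -w /rw.
have -> : rX t (fun l => if l \in leaves t then Some (beta l) else None) a b = beta @: side_leaves t a b.
  apply/setP => e; rewrite inE; apply/existsP/imsetP.
  - move=> [l /andP[cl]]; case: ifP => // ll /eqP[<-]; exists l => //.
    by rewrite inE ll.
  - move=> [l]; rewrite inE => /andP[ll cl] ->; exists l; by rewrite cl ll eqxx.
exact: (@leq_bigmax_cond _ (fun p : 'I_n.+1 * 'I_n.+1 => t p.1 p.2)
          (fun p => edge_width E t beta p.1 p.2) (a, b) tab).
Qed.

Definition ginv (V : finType) (G : sdigraph V) :=
  forall p, p \in G.2 -> [&& p.1 \in G.1, p.2 \in G.1 & p.1 != p.2].

Lemma contracts_RD (V : finType) (G G' : sdigraph V) k :
  contracts G G' -> ginv G -> RD G.2 k -> RD G'.2 k /\ ginv G'.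
Proof.
elim => {G G'} [G|G x y G' bf _ IH] gi R; first by [].
have nl : forall p, p \in G.2 -> p.1 != p.2 by move=> p /gi /and3P[].
apply: IH.
- move=> p; apply: contract_inv nl bf _ p.
  by move=> q /gi /and3P[-> ->].
- exact: RD_contract.
Qed.

Theorem mainTheorem13 (V : finType) (E : rel V) (W : finType) (F : rel W) :
  irreflexive E -> irreflexive F ->
  butterfly_minor F E -> dbw F <= dbw E.
Proof.
move=> irrE _ [A [B [BE [BA [G' [cG [f [finj [fim fF]]]]]]]]].
have R1 : RD B (dbw E) := RD_sub BE (RD_of_dbw E).
have gi0 : ginv (A, B).
  move=> p pB /=; case/andP: (BA p pB) => -> -> /=.
  have := subsetP BE p pB; rewrite inE => Ep.
  by apply/eqP => Ep'; move: Ep; rewrite -Ep' irrE.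
have [R2 gi2] := contracts_RD cG gi0 R1.
case: (eqVneq (arcs F) set0) => HF.
  by apply: leq_trans (dbw_le0 HF) _.
have /set0Pn [[w0 w1] _] := HF.
have R3 : RD (arcs F) (dbw E).
  apply: (@RD_iso _ _ G'.1 G'.2 F f finj fim fF _ w0) => //.
  by move=> p /gi2 /and3P[-> ->].
case: R3 => n [t [lab R]].
exact: dbw_le (prune R HF).
Qed.
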